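(* Let $G$ be a Polish group, $X$ a Polish space with a continuous $G$-action, and $C\subseteq X$ a Borel $G$-lg comeager set. Then $E^C_G\sim_B E^X_G$.
   Context: $E^X_G=\{(x,y):\exists g\in G\ g\cdot x=y\}$ and for $A\subseteq X$, $E^A_G=E^X_G\cap(A\times A)$ (regarded as an equivalence relation on the standard Borel space $A$ when $A$ is Borel). For $x\in X$ and $A\subseteq X$, $G(x,A)=\{g\in G:g\cdot x\in A\}$. A set $C\subseteq X$ is $G$-lg (locally globally) comeager if $G\setminus G(x,C)$ is meager in $G$ for every $x\in X$. $E\sim_B F$ means there are Borel reductions in both directions, where a Borel reduction of $E$ to $F$ is a Borel map $\psi$ with $(x,y)\in E\iff(\psi(x),\psi(y))\in F$. *)

(* Defs.v *)
From Stdlib Require Import Reals.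
Open Scope R_scope.

Definition is_metric {X : Type} (d : X -> X -> R) : Prop :=
  (forall x y, 0 <= d x y) /\
  (forall x y, d x y = 0 <-> x = y) /\
  (forall x y, d x y = d y x) /\
  (forall x y z, d x z <= d x y + d y z).

Definition cauchy_seq {X : Type} (d : X -> X -> R) (u : nat -> X) : Prop :=
  forall eps, 0 < eps -> exists N, forall n m, (N <= n)%nat -> (N <= m)%nat ->
    d (u n) (u m) < eps.

Definition converges_to {X : Type} (d : X -> X -> R) (u : nat -> X) (l : X) : Prop :=
  forall eps, 0 < eps -> exists N, forall n, (N <= n)%nat -> d (u n) l < eps.

Definition complete_metric {X : Type} (d : X -> X -> R) : Prop :=
  forall u, cauchy_seq d u -> exists l, converges_to d u l.

(* countable dense subset (enumerated with possible gaps, so that the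
   empty space is allowed) *)
Definition separable_metric {X : Type} (d : X -> X -> R) : Prop :=
  exists D : nat -> option X, forall x eps, 0 < eps ->
    exists n y, D n = Some y /\ d x y < eps.

Definition polish_metric {X : Type} (d : X -> X -> R) : Prop :=
  is_metric d /\ complete_metric d /\ separable_metric d.

Definition is_open {X : Type} (d : X -> X -> R) (U : X -> Prop) : Prop :=
  forall x, U x -> exists eps, 0 < eps /\ forall y, d x y < eps -> U y.

Definition closure {X : Type} (d : X -> X -> R) (A : X -> Prop) : X -> Prop :=
  fun x => forall U, is_open d U -> U x -> exists y, U y /\ A y.

Definition nowhere_dense {X : Type} (d : X -> X -> R) (A : X -> Prop) : Prop :=
  forall U, is_open d U -> (forall x, U x -> closure d A x) -> forall x, ~ U x.

Definition meager {X : Type} (d : X -> X -> R) (A : X -> Prop) : Prop :=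
  exists N : nat -> X -> Prop, (forall n, nowhere_dense d (N n)) /\
    forall x, A x -> exists n, N n x.

Definition sigma_algebra {X : Type} (S : (X -> Prop) -> Prop) : Prop :=
  (forall A, S A -> S (fun x => ~ A x)) /\
  (forall A : nat -> X -> Prop, (forall n, S (A n)) -> S (fun x => exists n, A n x)).

Definition borel {X : Type} (d : X -> X -> R) (A : X -> Prop) : Prop :=
  forall S : (X -> Prop) -> Prop, sigma_algebra S ->
    (forall U, is_open d U -> S U) -> S A.

Definition sub_borel {X : Type} (d : X -> X -> R) (C : X -> Prop)
  (B : {x : X | C x} -> Prop) : Prop :=
  exists A, borel d A /\ forall c, B c <-> A (proj1_sig c).

Definition measurable {A B : Type} (SA : (A -> Prop) -> Prop)
  (SB : (B -> Prop) -> Prop) (f : A -> B) : Prop :=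
  forall V, SB V -> SA (fun a => V (f a)).

Definition borel_reduction {A B : Type} (SA : (A -> Prop) -> Prop)
  (SB : (B -> Prop) -> Prop) (E : A -> A -> Prop) (F : B -> B -> Prop)
  (f : A -> B) : Prop :=
  measurable SA SB f /\ forall x y, E x y <-> F (f x) (f y).

Definition borel_reducible {A B : Type} (SA : (A -> Prop) -> Prop)
  (SB : (B -> Prop) -> Prop) (E : A -> A -> Prop) (F : B -> B -> Prop) : Prop :=
  exists f : A -> B, borel_reduction SA SB E F f.

Definition borel_bireducible {A B : Type} (SA : (A -> Prop) -> Prop)
  (SB : (B -> Prop) -> Prop) (E : A -> A -> Prop) (F : B -> B -> Prop) : Prop :=
  borel_reducible SA SB E F /\ borel_reducible SB SA F E.

Definition is_group {G : Type} (mul : G -> G -> G) (inv : G -> G) (e : G) : Prop :=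
  (forall a b c, mul a (mul b c) = mul (mul a b) c) /\
  (forall a, mul e a = a /\ mul a e = a) /\
  (forall a, mul (inv a) a = e /\ mul a (inv a) = e).

Definition continuous1 {A B : Type} (dA : A -> A -> R) (dB : B -> B -> R)
  (f : A -> B) : Prop :=
  forall a eps, 0 < eps -> exists delta, 0 < delta /\
    forall a', dA a a' < delta -> dB (f a) (f a') < eps.

Definition continuous2 {A B C : Type} (dA : A -> A -> R) (dB : B -> B -> R)
  (dC : C -> C -> R) (f : A -> B -> C) : Prop :=
  forall a b eps, 0 < eps -> exists delta, 0 < delta /\
    forall a' b', dA a a' < delta -> dB b b' < delta ->
      dC (f a b) (f a' b') < eps.

Definition polish_group {G : Type} (dG : G -> G -> R) (mul : G -> G -> G)
  (inv : G -> G) (e : G) : Prop :=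
  polish_metric dG /\ is_group mul inv e /\
  continuous2 dG dG dG mul /\ continuous1 dG dG inv.

Definition continuous_action {G X : Type} (dG : G -> G -> R) (mul : G -> G -> G)
  (e : G) (dX : X -> X -> R) (act : G -> X -> X) : Prop :=
  (forall x, act e x = x) /\
  (forall g h x, act (mul g h) x = act g (act h x)) /\
  continuous2 dG dX dX act.

Definition orbit_rel {G X : Type} (act : G -> X -> X) (x y : X) : Prop :=
  exists g, act g x = y.

Definition orbit_rel_on {G X : Type} (act : G -> X -> X) (C : X -> Prop)
  (a b : {x : X | C x}) : Prop :=
  orbit_rel act (proj1_sig a) (proj1_sig b).

Definition return_set {G X : Type} (act : G -> X -> X) (x : X) (A : X -> Prop) : G -> Prop :=
  fun g => A (act g x).

Definition lg_comeager {G X : Type} (dG : G -> G -> R) (act : G -> X -> X)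
  (C : X -> Prop) : Prop :=
  forall x, meager dG (fun g => ~ return_set act x C g).

(* Main.v *)
Require Import Defs.
From Stdlib Require Import Reals Lra Lia Classical ClassicalEpsilon FunctionalExtensionality PropExtensionality Cantor.
Open Scope R_scope.

Lemma pred_ext {T} (A B : T -> Prop) : (forall x, A x <-> B x) -> A = B.
Proof. intro H; apply functional_extensionality; intro x; apply propositional_extensionality; auto. Qed.

Lemma borel_ext {X} (d : X -> X -> R) (A B : X -> Prop) :
  (forall x, A x <-> B x) -> borel d A -> borel d B.
Proof. intros H HA. rewrite <- (pred_ext A B H). exact HA. Qed.

Lemma borel_open {X} (d : X -> X -> R) U : is_open d U -> borel d U.
Proof. intros HU S _ HS. auto. Qed.

Lemma borel_compl {X} (d : X -> X -> R) A : borel d A -> borel d (fun x => ~ A x).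
Proof. intros HA S HS Ho. destruct HS as [Hc Hu]. apply Hc. apply HA; [split|]; auto. Qed.

Lemma borel_union {X} (d : X -> X -> R) (A : nat -> X -> Prop) :
  (forall n, borel d (A n)) -> borel d (fun x => exists n, A n x).
Proof. intros HA S HS Ho. destruct HS as [Hc Hu]. apply Hu. intro n. apply HA; [split|]; auto. Qed.

Lemma borel_empty {X} (d : X -> X -> R) : borel d (fun _ => False).
Proof. apply borel_open. intros x []. Qed.

Lemma borel_full {X} (d : X -> X -> R) : borel d (fun _ => True).
Proof. apply (borel_ext d (fun x => ~ False)); [tauto|]. apply borel_compl, borel_empty. Qed.

Lemma borel_inter {X} (d : X -> X -> R) (A : nat -> X -> Prop) :
  (forall n, borel d (A n)) -> borel d (fun x => forall n, A n x).
Proof.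
  intros HA. apply (borel_ext d (fun x => ~ exists n, ~ A n x)).
  - intro x; split.
    + intros H n. apply NNPP. intro Hn. apply H. eauto.
    + intros H [n Hn]. auto.
  - apply borel_compl, borel_union. intro n. apply borel_compl. auto.
Qed.

Lemma borel_or {X} (d : X -> X -> R) A B : borel d A -> borel d B -> borel d (fun x => A x \/ B x).
Proof.
  intros HA HB. apply (borel_ext d (fun x => exists n, (match n with O => A | _ => B end) x)).
  - intro x; split.
    + intros [[|n] H]; auto.
    + intros [H|H]; [exists O|exists (S O)]; auto.
  - apply borel_union. intros [|n]; auto.
Qed.

Lemma borel_and {X} (d : X -> X -> R) A B : borel d A -> borel d B -> borel d (fun x => A x /\ B x).
Proof.
  intros HA HB. apply (borel_ext d (fun x => ~ (~ A x \/ ~ B x))).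
  - intro x; tauto.
  - apply borel_compl, borel_or; apply borel_compl; auto.
Qed.

Lemma borel_cand {X} (d : X -> X -> R) (Q : Prop) A : borel d A -> borel d (fun x => Q /\ A x).
Proof.
  intros HA. destruct (classic Q) as [q|nq].
  - apply (borel_ext d A); [tauto|auto].
  - apply (borel_ext d (fun _ => False)); [tauto|apply borel_empty].
Qed.

Lemma borel_cor {X} (d : X -> X -> R) (Q : Prop) A : borel d A -> borel d (fun x => Q \/ A x).
Proof.
  intros HA. destruct (classic Q) as [q|nq].
  - apply (borel_ext d (fun _ => True)); [tauto|apply borel_full].
  - apply (borel_ext d A); [tauto|auto].
Qed.

Lemma borel_preimage {X Y} (dX : X -> X -> R) (dY : Y -> Y -> R) (h : X -> Y) :
  (forall U, is_open dY U -> borel dX (fun x => U (h x))) ->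
  forall B, borel dY B -> borel dX (fun x => B (h x)).
Proof.
  intros Ho B HB. apply (HB (fun V => borel dX (fun x => V (h x)))); auto.
  split.
  - intros A HA. apply (borel_compl dX _ HA).
  - intros A HA. apply (borel_union dX (fun n x => A n (h x)) HA).
Qed.

Lemma met_pos {X} (d : X -> X -> R) : is_metric d -> forall x y, 0 <= d x y.
Proof. intros [H _]; auto. Qed.
Lemma met_refl {X} (d : X -> X -> R) : is_metric d -> forall x, d x x = 0.
Proof. intros [_ [H _]] x. apply H. reflexivity. Qed.
Lemma met_sym {X} (d : X -> X -> R) : is_metric d -> forall x y, d x y = d y x.
Proof. intros [_ [_ [H _]]]; auto. Qed.
Lemma met_tri {X} (d : X -> X -> R) : is_metric d -> forall x y z, d x z <= d x y + d y z.
Proof. intros [_ [_ [_ H]]]; auto. Qed.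

Lemma ball_open {X} (d : X -> X -> R) c r : is_metric d -> is_open d (fun y => d c y < r).
Proof.
  intros Hm x Hx. exists (r - d c x). split; [lra|].
  intros y Hy. pose proof (met_tri d Hm c x y). lra.
Qed.

Lemma open_and {X} (d : X -> X -> R) U V : is_open d U -> is_open d V -> is_open d (fun x => U x /\ V x).
Proof.
  intros HU HV x [Ux Vx]. destruct (HU x Ux) as [e1 [He1 H1]]. destruct (HV x Vx) as [e2 [He2 H2]].
  exists (Rmin e1 e2). split; [apply Rmin_pos; auto|].
  intros y Hy. split; [apply H1|apply H2]; pose proof (Rmin_l e1 e2); pose proof (Rmin_r e1 e2); lra.
Qed.

Lemma small_inv eps : 0 < eps -> exists m, / INR (S m) < eps.
Proof.
  intros He. destruct (archimed_cor1 eps He) as [N [HN HN0]].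
  destruct N as [|m]; [lia|]. exists m; auto.
Qed.

Lemma inv_pos m : 0 < / INR (S m).
Proof. apply Rinv_0_lt_compat. apply lt_0_INR. lia. Qed.

Definition bvalid {T} (D : nat -> option T) n := D (fst (Cantor.of_nat n)) <> None.
Definition bcen {T} (D : nat -> option T) (t0 : T) n :=
  match D (fst (Cantor.of_nat n)) with Some c => c | None => t0 end.
Definition brad n := / INR (S (snd (Cantor.of_nat n))).
Definition bball {T} (d : T -> T -> R) (D : nat -> option T) n : T -> Prop :=
  fun y => exists c, D (fst (Cantor.of_nat n)) = Some c /\ d c y < brad n.

Lemma brad_pos n : 0 < brad n.
Proof. apply inv_pos. Qed.

Lemma bball_open {T} (d : T -> T -> R) D n : is_metric d -> is_open d (bball d D n).
Proof.
  intros Hm x [c [Hc Hx]]. destruct (ball_open d c (brad n) Hm x Hx) as [e [He H]].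
  exists e; split; auto. intros y Hy. exists c; split; auto.
Qed.

Lemma basis_small {T} (d : T -> T -> R) (D : nat -> option T) :
  is_metric d -> (forall x eps, 0 < eps -> exists n y, D n = Some y /\ d x y < eps) ->
  forall g delta rho, 0 < delta -> 0 < rho ->
  exists n c, D (fst (Cantor.of_nat n)) = Some c /\ brad n <= rho /\ d c g < brad n /\
    forall y, d c y <= brad n -> d g y < delta.
Proof.
  intros Hm HD g delta rho Hd Hr.
  destruct (small_inv (Rmin (delta/2) rho)) as [m Hmr].
  { apply Rmin_pos; lra. }
  pose proof (Rmin_l (delta/2) rho). pose proof (Rmin_r (delta/2) rho).
  destruct (HD g (/ INR (S m)) (inv_pos m)) as [a [c [Ha Hc]]].
  exists (Cantor.to_nat (a, m)), c. unfold brad. rewrite Cantor.cancel_of_to. cbn [fst snd].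
  split; [auto|]. split; [lra|]. split.
  - rewrite (met_sym d Hm). auto.
  - intros y Hy. pose proof (met_tri d Hm g c y). lra.
Qed.

Lemma exists_min (P : nat -> Prop) : (exists n, P n) -> exists n, P n /\ forall m, P m -> (n <= m)%nat.
Proof.
  intros [n Hn]. apply NNPP. intro Hno.
  assert (H : forall k, forall j, (j <= k)%nat -> ~ P j).
  { induction k as [|k IH]; intros j Hj Pj.
    - apply Hno. exists j. split; auto. intros m _. lia.
    - apply Hno. exists j. split; auto. intros m Pm. destruct (Compare_dec.le_lt_dec j m); auto.
      exfalso. apply (IH m); [lia|auto]. }
  apply (H n n); auto.
Qed.

Definition least (P : nat -> Prop) : nat :=
  epsilon (inhabits 0%nat) (fun n => P n /\ forall m, P m -> (n <= m)%nat).

Lemma least_spec P : (exists n, P n) -> P (least P) /\ forall m, P m -> (least P <= m)%nat.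
Proof. intro H. unfold least. apply epsilon_spec. apply exists_min; auto. Qed.

Lemma least_eq P i : (exists n, P n) -> (least P = i <-> P i /\ forall m, (m < i)%nat -> ~ P m).
Proof.
  intros H. destruct (least_spec P H) as [H1 H2]. split.
  - intros <-. split; auto. intros m Hm Pm. specialize (H2 m Pm). lia.
  - intros [Pi Hi]. specialize (H2 i Pi). destruct (Nat.eq_dec (least P) i); auto.
    exfalso. apply (Hi (least P)); [lia|auto].
Qed.

Fixpoint seqidx (c0 : nat) (step : nat -> nat -> nat) (k : nat) : nat :=
  match k with O => c0 | S k => step k (seqidx c0 step k) end.

Lemma nested_chain {T} (d : T -> T -> R) (c : nat -> T) (r : nat -> R) :
  (forall k y, d (c (S k)) y <= r (S k) -> d (c k) y <= r k) ->
  forall n p y, d (c (n + p)%nat) y <= r (n + p)%nat -> d (c n) y <= r n.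
Proof.
  intros H n p. induction p as [|p IH]; intros y Hy.
  - rewrite Nat.add_0_r in Hy. auto.
  - apply IH. apply H. rewrite <- Nat.add_succ_r. auto.
Qed.

Lemma nested_limit {T} (d : T -> T -> R) (c : nat -> T) (r : nat -> R) :
  is_metric d -> complete_metric d ->
  (forall k, r k <= / INR (S k)) ->
  (forall k y, d (c (S k)) y <= r (S k) -> d (c k) y <= r k) ->
  (forall k, 0 <= r k) ->
  exists g, converges_to d c g.
Proof.
  intros Hm Hc Hr Hn Hp. apply Hc. intros eps He.
  assert (Hb : forall n m, (n <= m)%nat -> d (c n) (c m) <= r n).
  { intros n m Hnm. replace m with (n + (m - n))%nat by lia.
    apply (nested_chain d c r Hn n (m - n)). rewrite (met_refl d Hm). auto. }
  destruct (small_inv (eps/2)) as [N HN]; [lra|].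
  exists N. intros n m Hn' Hm'.
  pose proof (Hb N n Hn'). pose proof (Hb N m Hm'). pose proof (Hr N).
  pose proof (met_tri d Hm (c n) (c N) (c m)). rewrite (met_sym d Hm (c n) (c N)) in H2. lra.
Qed.

Lemma limit_in_balls {T} (d : T -> T -> R) (c : nat -> T) (r : nat -> R) g :
  is_metric d -> converges_to d c g ->
  (forall k y, d (c (S k)) y <= r (S k) -> d (c k) y <= r k) ->
  (forall k, 0 <= r k) -> forall k, d (c k) g <= r k.
Proof.
  intros Hm Hcv Hn Hp k. destruct (Rle_lt_dec (d (c k) g) (r k)) as [H|H]; auto. exfalso.
  destruct (Hcv (d (c k) g - r k)) as [N HN]; [lra|].
  specialize (HN (k + N)%nat ltac:(lia)).
  assert (Hb : d (c k) (c (k + N)%nat) <= r k).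
  { apply (nested_chain d c r Hn k N). rewrite (met_refl d Hm). auto. }
  pose proof (met_tri d Hm (c k) (c (k+N)%nat) g). lra.
Qed.

Lemma seq_props (Q0 : nat -> Prop) (QS : nat -> nat -> nat -> Prop) (good : nat -> nat -> Prop) :
  (exists i, Q0 i) -> (forall i, Q0 i -> good O i) ->
  (forall k i i', QS k i i' -> good (S k) i') ->
  (forall k i, good k i -> exists i', QS k i i') ->
  let idx := seqidx (least Q0) (fun k i => least (QS k i)) in
  Q0 (idx O) /\ forall k, good k (idx k) /\ QS k (idx k) (idx (S k)).
Proof.
  intros H0 Hg0 HgS HS idx.
  assert (A0 : Q0 (idx O)) by (apply (least_spec _ H0)).
  assert (G : forall k, good k (idx k)).
  { induction k as [|k IH]; auto.
    apply (HgS k (idx k)). apply (least_spec _ (HS k _ IH)). }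
  split; auto. intro k. split; auto. apply (least_spec _ (HS k _ (G k))).
Qed.

Lemma basis_small' {T} (d : T -> T -> R) (D : nat -> option T) (t0 : T) :
  is_metric d -> (forall x eps, 0 < eps -> exists n y, D n = Some y /\ d x y < eps) ->
  forall g delta rho, 0 < delta -> 0 < rho ->
  exists n, bvalid D n /\ brad n <= rho /\ d (bcen D t0 n) g < brad n /\
    forall y, d (bcen D t0 n) y <= brad n -> d g y < delta.
Proof.
  intros Hm HD g delta rho Hd Hr.
  destruct (basis_small d D Hm HD g delta rho Hd Hr) as [n [c [Hc H]]].
  exists n. unfold bvalid, bcen. rewrite Hc. split; [discriminate|auto].
Qed.

Lemma open_in_ball {T} (d : T -> T -> R) (D : nat -> option T) (t0 : T) :
  is_metric d -> (forall x eps, 0 < eps -> exists n y, D n = Some y /\ d x y < eps) ->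
  forall U g rho, is_open d U -> U g -> 0 < rho ->
  exists n, bvalid D n /\ brad n <= rho /\ forall y, d (bcen D t0 n) y <= brad n -> U y.
Proof.
  intros Hm HD U g rho HU Ug Hr. destruct (HU g Ug) as [e [He H]].
  destruct (basis_small' d D t0 Hm HD g e rho He Hr) as [n [Hv [Hb [_ Hin]]]].
  exists n. repeat split; auto.
Qed.

Lemma nd_avoid {T} (d : T -> T -> R) N U u :
  is_metric d -> nowhere_dense d N -> is_open d U -> U u ->
  exists g V, is_open d V /\ U g /\ V g /\ forall z, V z -> ~ N z.
Proof.
  intros Hm HN HU Uu.
  assert (exists y, U y /\ ~ closure d N y) as [y [Uy Hy]].
  { apply NNPP. intro H. apply (HN U HU) with u; auto.
    intros x Ux. apply NNPP. intro Hx. apply H. eauto. }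
  unfold closure in Hy. apply not_all_ex_not in Hy as [V HV].
  apply imply_to_and in HV as [HVo HV]. apply imply_to_and in HV as [Vy HV].
  exists y, V. repeat split; auto. intros z Vz Nz. apply HV. eauto.
Qed.

Lemma baire {T} (d : T -> T -> R) (t0 : T) : polish_metric d ->
  forall N : nat -> T -> Prop, (forall n, nowhere_dense d (N n)) -> exists g, forall n, ~ N n g.
Proof.
  intros [Hm [Hc [D HD]]] N HN.
  set (cb := fun i y => d (bcen D t0 i) y <= brad i).
  set (Q0 := fun i => bvalid D i /\ brad i <= / INR 1 /\ forall y, cb i y -> ~ N O y).
  set (QS := fun k i i' => bvalid D i' /\ brad i' <= / INR (S (S k)) /\
        (forall y, cb i' y -> cb i y) /\ forall y, cb i' y -> ~ N (S k) y).
  set (good := fun k i => bvalid D i /\ brad i <= / INR (S k)).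
  assert (Hstep : forall U u n rho, is_open d U -> U u -> 0 < rho ->
     exists i, bvalid D i /\ brad i <= rho /\ forall y, cb i y -> U y /\ ~ N n y).
  { intros U u n rho HU Uu Hr. destruct (nd_avoid d (N n) U u Hm (HN n) HU Uu) as [g [V [HV [Ug [Vg HVN]]]]].
    destruct (open_in_ball d D t0 Hm HD (fun y => U y /\ V y) g rho) as [i [Hi1 [Hi2 Hi3]]]; auto.
    - apply open_and; auto.
    - exists i. split; [auto|split; [auto|]]. intros y Hy. split; [apply Hi3; auto|]. apply HVN. apply Hi3; auto. }
  destruct (seq_props Q0 QS good) as [A0 AS].
  - destruct (Hstep (fun _ => True) t0 O (/ INR 1)) as [i Hi]; auto.
    + intros x _. exists 1; split; [lra|auto].
    + apply inv_pos.
    + exists i. unfold Q0. destruct Hi as [? [? Hi]]. repeat split; auto. intros y Hy; apply Hi; auto.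
  - intros i [? [? _]]. split; auto.
  - intros k i i' [? [? _]]. split; auto.
  - intros k i [Hv Hb].
    destruct (Hstep (fun y => d (bcen D t0 i) y < brad i) (bcen D t0 i) (S k) (/ INR (S (S k))))
      as [i' [H1 [H2 H3]]].
    + apply ball_open; auto.
    + rewrite (met_refl d Hm). apply brad_pos.
    + apply inv_pos.
    + exists i'. unfold QS. repeat split; auto.
      * intros y Hy. unfold cb. left. apply H3; auto.
      * intros y Hy. apply H3; auto.
  - set (idx := seqidx (least Q0) (fun k i => least (QS k i))) in *.
    set (c := fun k => bcen D t0 (idx k)). set (r := fun k => brad (idx k)).
    assert (Hn : forall k y, d (c (S k)) y <= r (S k) -> d (c k) y <= r k).
    { intros k y Hy. destruct (AS k) as [_ [_ [_ [H _]]]]. apply H. exact Hy. }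
    assert (Hp : forall k, 0 <= r k) by (intro k; left; apply brad_pos).
    destruct (nested_limit d c r Hm Hc) as [g Hg]; auto.
    { intro k. destruct (AS k) as [[_ H] _]. exact H. }
    exists g. intros n. pose proof (limit_in_balls d c r g Hm Hg Hn Hp) as Hl.
    destruct n as [|n].
    + destruct A0 as [_ [_ H]]. apply H. apply (Hl O).
    + destruct (AS n) as [_ [_ [_ [_ H]]]]. apply H. apply (Hl (S n)).
Qed.

Definition rect_open {X G} (dX : X -> X -> R) (dG : G -> G -> R) (O : X -> G -> Prop) : Prop :=
  exists (B : nat -> X -> Prop) (V : nat -> G -> Prop),
    (forall j, borel dX (B j)) /\ (forall j, is_open dG (V j)) /\
    forall x g, O x g <-> exists j, B j x /\ V j g.

Definition dense_sec {X G} (dG : G -> G -> R) (W : X -> G -> Prop) : Prop :=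
  forall x U, is_open dG U -> (exists g, U g) -> exists g, U g /\ W x g.

Definition goodset {X G} (dX : X -> X -> R) (dG : G -> G -> R) (act : G -> X -> X) (A : X -> Prop) : Prop :=
  exists O, rect_open dX dG O /\ exists W : nat -> X -> G -> Prop,
    (forall k, rect_open dX dG (W k) /\ dense_sec dG (W k)) /\
    forall x g, (forall k, W k x g) -> (A (act g x) <-> O x g).

Lemma rect_union {X G} (dX : X -> X -> R) (dG : G -> G -> R) (O : nat -> X -> G -> Prop) :
  (forall n, rect_open dX dG (O n)) -> rect_open dX dG (fun x g => exists n, O n x g).
Proof.
  intros H. destruct (choice (fun n (p : (nat -> X -> Prop) * (nat -> G -> Prop)) =>
     (forall j, borel dX (fst p j)) /\ (forall j, is_open dG (snd p j)) /\
     forall x g, O n x g <-> exists j, fst p j x /\ snd p j g)) as [f Hf].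
  { intro n. destruct (H n) as [B [V HBV]]. exists (B, V). exact HBV. }
  exists (fun m => fst (f (fst (of_nat m))) (snd (of_nat m))).
  exists (fun m => snd (f (fst (of_nat m))) (snd (of_nat m))).
  split; [intro m; apply (Hf _)|]. split; [intro m; apply (Hf _)|].
  intros x g. split.
  - intros [n Hn]. apply (proj2 (proj2 (Hf n))) in Hn. destruct Hn as [j Hj].
    exists (to_nat (n, j)). rewrite cancel_of_to. exact Hj.
  - intros [m Hm]. exists (fst (of_nat m)). apply (proj2 (proj2 (Hf _))). eauto.
Qed.

Lemma rect_full {X G} (dX : X -> X -> R) (dG : G -> G -> R) : rect_open dX dG (fun _ _ => True).
Proof.
  exists (fun _ _ => True), (fun _ _ => True). split; [intro; apply borel_full|].
  split; [intros j x _; exists 1; split; [lra|auto]|]. intros x g; split; [exists O|]; auto.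
Qed.

Lemma good_open {X G} (dX : X -> X -> R) (dG : G -> G -> R) (act : G -> X -> X) (DX : nat -> option X) (DG : nat -> option G) :
  is_metric dX -> is_metric dG ->
  (forall x eps, 0 < eps -> exists n y, DX n = Some y /\ dX x y < eps) ->
  (forall x eps, 0 < eps -> exists n y, DG n = Some y /\ dG x y < eps) ->
  continuous2 dG dX dX act ->
  forall A, is_open dX A -> goodset dX dG act A.
Proof.
  intros HmX HmG HDX HDG Hact A HA.
  exists (fun x g => A (act g x)). split.
  2:{ exists (fun _ _ _ => True). split; [intro k; split; [apply rect_full|]|].
      - intros x U _ [g Hg]. eauto.
      - tauto. }
  set (Q := fun n => forall x' g', bball dX DX (fst (of_nat n)) x' -> bball dG DG (snd (of_nat n)) g' -> A (act g' x')).
  exists (fun n x => Q n /\ bball dX DX (fst (of_nat n)) x), (fun n => bball dG DG (snd (of_nat n))).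
  split; [intro n; apply borel_cand, borel_open, bball_open; auto|].
  split; [intro n; apply bball_open; auto|].
  intros x g. split.
  - intros Ha. destruct (HA _ Ha) as [e [He He']].
    destruct (Hact g x e He) as [dl [Hdl Hc]].
    destruct (basis_small dX DX HmX HDX x dl 1 Hdl ltac:(lra)) as [i [c [Hc1 [_ [Hc2 Hc3]]]]].
    destruct (basis_small dG DG HmG HDG g dl 1 Hdl ltac:(lra)) as [i' [c' [Hc1' [_ [Hc2' Hc3']]]]].
    exists (to_nat (i, i')). unfold Q. rewrite cancel_of_to. cbn [fst snd]. split; [split|].
    + intros x' g' [c0 [E0 H0]] [c0' [E0' H0']].
      rewrite Hc1 in E0. injection E0 as <-. rewrite Hc1' in E0'. injection E0' as <-.
      apply He'. apply Hc; [apply Hc3'|apply Hc3]; lra.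
    + exists c; split; auto.
    + exists c'; split; auto.
  - intros [n [[Hq Hx] Hg]]. apply Hq; auto.
Qed.

Lemma good_compl {X G} (dX : X -> X -> R) (dG : G -> G -> R) (act : G -> X -> X) (DG : nat -> option G) :
  is_metric dG ->
  (forall x eps, 0 < eps -> exists n y, DG n = Some y /\ dG x y < eps) ->
  forall A, goodset dX dG act A -> goodset dX dG act (fun x => ~ A x).
Proof.
  intros HmG HDG A [O [[B [V [HB [HV HO]]]] [W [HW HA]]]].
  set (O' := fun x g => exists n, (forall j, B j x -> forall h, V j h -> bball dG DG n h -> False) /\ bball dG DG n g).
  assert (RO' : rect_open dX dG O').
  { exists (fun n x => forall j, ~ B j x \/ (forall h, V j h -> bball dG DG n h -> False)),
      (fun n => bball dG DG n).
    split.
    - intro n. apply borel_inter. intro j.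
      apply (borel_ext dX (fun x => (forall h, V j h -> bball dG DG n h -> False) \/ ~ B j x)); [intro; tauto|].
      apply borel_cor, borel_compl, HB.
    - split; [intro n; apply bball_open; auto|].
      intros x g. unfold O'. split.
      + intros [n [H1 H2]]. exists n. split; auto. intro j. destruct (classic (B j x)); [right|left]; auto. apply H1; auto.
      + intros [n [H1 H2]]. exists n. split; auto. intros j Bj. destruct (H1 j); [contradiction|auto]. }
  assert (Hdis : forall x g, O x g -> O' x g -> False).
  { intros x g Ho [n [H1 H2]]. apply HO in Ho as [j [Bj Vj]]. eapply H1; eauto. }
  exists O'. split; auto.
  exists (fun k => match k with O => fun x g => O x g \/ O' x g | S k => W k end).
  split.
  - intros [|k]; [|apply HW]. split.
    + assert (HU : rect_open dX dG (fun x g => exists n, (match n with O => O | _ => O' end) x g)).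
      { apply rect_union. intros [|n]; auto. exists B, V; auto. }
      destruct HU as [B2 [V2 [H1 [H2 H3]]]]. exists B2, V2. split; auto. split; auto.
      intros x g. rewrite <- H3. split.
      * intros [H|H]; [exists 0%nat|exists 1%nat]; auto.
      * intros [[|n] H]; auto.
    + intros x U HU [u Uu]. destruct (classic (exists g, U g /\ O x g)) as [[g Hg]|Hno].
      * exists g. tauto.
      * destruct (open_in_ball dG DG u HmG HDG U u 1 HU Uu ltac:(lra)) as [n [Hn [_ Hin]]].
        exists u. split; auto. right. 
        destruct (HU u Uu) as [e [He He']].
        destruct (basis_small dG DG HmG HDG u e 1 He ltac:(lra)) as [m [c [Hc1 [_ [Hc2 Hc3]]]]].
        exists m. split.
        -- intros j Bj h Vj [c0 [E0 H0]]. rewrite Hc1 in E0. injection E0 as <-.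
           apply Hno. exists h. split; [apply He', Hc3; lra|]. apply HO. eauto.
        -- exists c. split; auto.
  - intros x g Hk. assert (Hall : forall k, W k x g) by (intro k; apply (Hk (S k))).
    specialize (HA x g Hall). specialize (Hk 0%nat). simpl in Hk. split.
    + intro nA. destruct Hk as [Ho|Ho']; auto. exfalso. apply nA. apply HA. auto.
    + intros Ho' Ha. apply HA in Ha. eauto.
Qed.

Lemma good_union {X G} (dX : X -> X -> R) (dG : G -> G -> R) (act : G -> X -> X) (A : nat -> X -> Prop) :
  (forall n, goodset dX dG act (A n)) -> goodset dX dG act (fun x => exists n, A n x).
Proof.
  intros H. destruct (choice (fun n (p : (X -> G -> Prop) * (nat -> X -> G -> Prop)) =>
     rect_open dX dG (fst p) /\ (forall k, rect_open dX dG (snd p k) /\ dense_sec dG (snd p k)) /\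
     forall x g, (forall k, snd p k x g) -> (A n (act g x) <-> fst p x g))) as [f Hf].
  { intro n. destruct (H n) as [O [HO [W HW]]]. exists (O, W). auto. }
  exists (fun x g => exists n, fst (f n) x g). split.
  { apply rect_union. intro n. apply (Hf n). }
  exists (fun m => snd (f (fst (of_nat m))) (snd (of_nat m))). split.
  - intro m. apply (Hf _).
  - intros x g Hk. assert (Hn : forall n, A n (act g x) <-> fst (f n) x g).
    { intro n. apply (Hf n). intro k. specialize (Hk (to_nat (n, k))). rewrite cancel_of_to in Hk. exact Hk. }
    split; intros [n Hn']; exists n; apply Hn; auto.
Qed.

Lemma borel_good {X G} (dX : X -> X -> R) (dG : G -> G -> R) (act : G -> X -> X) (DX : nat -> option X) (DG : nat -> option G) :
  is_metric dX -> is_metric dG ->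
  (forall x eps, 0 < eps -> exists n y, DX n = Some y /\ dX x y < eps) ->
  (forall x eps, 0 < eps -> exists n y, DG n = Some y /\ dG x y < eps) ->
  continuous2 dG dX dX act ->
  forall A, borel dX A -> goodset dX dG act A.
Proof.
  intros HmX HmG HDX HDG Hact A HA. apply HA.
  - split.
    + apply (good_compl dX dG act DG HmG HDG).
    + apply good_union.
  - apply (good_open dX dG act DX DG); auto.
Qed.

Lemma nd_compl_dense {X G} (dX : X -> X -> R) (dG : G -> G -> R) (W : X -> G -> Prop) x :
  is_metric dG -> rect_open dX dG W -> dense_sec dG W -> nowhere_dense dG (fun g => ~ W x g).
Proof.
  intros Hm [B [V [HB [HV HW]]]] Hd U HU Hcl g0 Ug0.
  destruct (Hd x U HU (ex_intro _ g0 Ug0)) as [g [Ug Wg]].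
  apply HW in Wg as Wg'. destruct Wg' as [j [Bj Vj]].
  destruct (Hcl g Ug (fun z => U z /\ V j z)) as [z [[Uz Vz] nW]].
  - apply open_and; auto.
  - auto.
  - apply nW. apply HW. eauto.
Qed.

Lemma act_conv {G X} (dG : G -> G -> R) (dX : X -> X -> R) (act : G -> X -> X) c g x :
  is_metric dG -> is_metric dX -> continuous2 dG dX dX act -> converges_to dG c g ->
  converges_to dX (fun k => act (c k) x) (act g x).
Proof.
  intros HmG HmX Hact Hc eps He. destruct (Hact g x eps He) as [dl [Hdl H]].
  destruct (Hc dl Hdl) as [N HN]. exists N. intros n Hn.
  rewrite (met_sym dX HmX). apply H.
  - rewrite (met_sym dG HmG). auto.
  - rewrite (met_refl dX HmX). auto.
Qed.

Lemma Tm_borel {G X} (dG : G -> G -> R) (dX : X -> X -> R) (act : G -> X -> X) (U : X -> Prop) (c : G) (r : R) :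
  is_metric dG -> is_metric dX -> continuous2 dG dX dX act ->
  borel dX (fun x => forall w, dX (act c x) w < r -> U w).
Proof.
  intros HmG HmX Hact.
  apply (borel_ext dX (fun x => ~ ~ (forall w, dX (act c x) w < r -> U w))); [intro; split; [intro HH; apply NNPP; exact HH|tauto]|].
  apply borel_compl, borel_open. intros x Hx.
  apply not_all_ex_not in Hx as [w Hw]. apply imply_to_and in Hw as [Hw1 Hw2].
  destruct (Hact c x (r - dX (act c x) w)) as [dl [Hdl H]]; [lra|].
  exists dl. split; auto. intros x' Hx' Hall. apply Hw2. apply Hall.
  assert (dX (act c x) (act c x') < r - dX (act c x) w).
  { apply H; auto. rewrite (met_refl dG HmG). auto. }
  pose proof (met_tri dX HmX (act c x') (act c x) w). rewrite (met_sym dX HmX (act c x') (act c x)) in H1. lra.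
Qed.

Lemma selector {G X} (dG : G -> G -> R) (dX : X -> X -> R) (act : G -> X -> X) (e : G)
  (DG : nat -> option G) (C : X -> Prop) :
  is_metric dG -> complete_metric dG ->
  (forall x eps, 0 < eps -> exists n y, DG n = Some y /\ dG x y < eps) ->
  is_metric dX -> continuous2 dG dX dX act ->
  goodset dX dG act C -> lg_comeager dG act C ->
  exists s : X -> G, (forall x, C (act (s x) x)) /\
    (forall U, is_open dX U -> borel dX (fun x => U (act (s x) x))).
Proof.
  intros HmG HcG HDG HmX Hact [O [[B [V [HB [HV HO]]]] [W [HW HA]]]] Hlg.
  assert (Hpol : polish_metric dG) by (split; [|split]; auto; exists DG; auto).
  assert (Hne : forall x, exists g, O x g).
  { intro x. destruct (Hlg x) as [Nm [HNm Hcov]].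
    set (N := fun n => match fst (of_nat n) with 0%nat => Nm (snd (of_nat n))
                        | _ => fun g => ~ W (snd (of_nat n)) x g end).
    destruct (baire dG e Hpol N) as [g Hg].
    - intro n. unfold N. destruct (fst (of_nat n)); auto.
      destruct (HW (snd (of_nat n))) as [H1 H2]. apply (nd_compl_dense dX dG); auto.
    - exists g. assert (Hall : forall k, W k x g).
      { intro k. specialize (Hg (to_nat (1%nat, k))). unfold N in Hg. rewrite cancel_of_to in Hg.
        cbn [fst snd] in Hg. apply NNPP. exact Hg. }
      apply (HA x g Hall). apply NNPP. intro nC. destruct (Hcov g nC) as [m Hm].
      apply (Hg (to_nat (0%nat, m))). unfold N. rewrite cancel_of_to. exact Hm. }
  destruct (choice (fun k (p : (nat -> X -> Prop) * (nat -> G -> Prop)) =>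
     (forall j, borel dX (fst p j)) /\ (forall j, is_open dG (snd p j)) /\
     forall x g, W k x g <-> exists j, fst p j x /\ snd p j g)) as [fW HfW].
  { intro k. destruct (proj1 (HW k)) as [B' [V' H']]. exists (B', V'). exact H'. }
  set (BW := fun k => fst (fW k)). set (VW := fun k => snd (fW k)).
  assert (HBW : forall k j, borel dX (BW k j)) by (intros; apply (HfW k)).
  assert (HVW : forall k j, is_open dG (VW k j)) by (intros; apply (HfW k)).
  assert (HWW : forall k x g, W k x g <-> exists j, BW k j x /\ VW k j g) by (intros; apply (HfW k)).
  set (cb := fun i y => dG (bcen DG e i) y <= brad i).
  set (Q0 := fun x i => bvalid DG i /\ brad i <= / INR 1 /\ exists j, B j x /\ forall y, cb i y -> V j y).
  set (QS := fun x k i i' => bvalid DG i' /\ brad i' <= / INR (S (S k)) /\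
       (forall y, cb i' y -> cb i y) /\ exists j, BW k j x /\ forall y, cb i' y -> VW k j y).
  set (good := fun k i => bvalid DG i /\ brad i <= / INR (S k)).
  assert (E0 : forall x, exists i, Q0 x i).
  { intro x. destruct (Hne x) as [g Hg]. apply HO in Hg as [j [Bj Vj]].
    destruct (open_in_ball dG DG e HmG HDG (V j) g (/ INR 1) (HV j) Vj (inv_pos 0)) as [i [H1 [H2 H3]]].
    exists i. split; auto. split; auto. exists j. split; auto. }
  assert (ES : forall x k i, good k i -> exists i', QS x k i i').
  { intros x k i [Hv Hb].
    destruct (proj2 (HW k) x (fun y => dG (bcen DG e i) y < brad i)) as [g [Hgi Wg]].
    - apply ball_open; auto.
    - exists (bcen DG e i). rewrite (met_refl dG HmG). apply brad_pos.
    - apply HWW in Wg as [j [Bj Vj]].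
      destruct (open_in_ball dG DG e HmG HDG (fun y => VW k j y /\ dG (bcen DG e i) y < brad i) g
        (/ INR (S (S k)))) as [i' [H1 [H2 H3]]].
      + apply open_and; auto. apply ball_open; auto.
      + auto.
      + apply inv_pos.
      + exists i'. split; auto. split; auto. split.
        * intros y Hy. unfold cb. left. apply H3. auto.
        * exists j. split; auto. intros y Hy. apply H3. auto. }
  set (idx := fun x => seqidx (least (Q0 x)) (fun k i => least (QS x k i))).
  assert (Hprops : forall x, Q0 x (idx x 0%nat) /\ forall k, good k (idx x k) /\ QS x k (idx x k) (idx x (S k))).
  { intro x. apply (seq_props (Q0 x) (QS x) good).
    - apply E0.
    - intros i [? [? _]]. split; auto.
    - intros k i i' [? [? _]]. split; auto.
    - apply ES. }
  set (cen := fun x k => bcen DG e (idx x k)).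
  set (rr := fun x k => brad (idx x k)).
  assert (Hnest : forall x k y, dG (cen x (S k)) y <= rr x (S k) -> dG (cen x k) y <= rr x k).
  { intros x k y Hy. destruct (Hprops x) as [_ H]. destruct (H k) as [_ [_ [_ [Hc _]]]]. apply Hc. exact Hy. }
  assert (Hrp : forall x k, 0 <= rr x k) by (intros; left; apply brad_pos).
  assert (Hconv : forall x, exists g, converges_to dG (cen x) g).
  { intro x. apply (nested_limit dG (cen x) (rr x) HmG HcG); auto.
    intro k. destruct (Hprops x) as [_ H]. apply (H k). }
  set (s := fun x => epsilon (inhabits e) (fun g => converges_to dG (cen x) g)).
  assert (Hs : forall x, converges_to dG (cen x) (s x)) by (intro x; apply epsilon_spec, Hconv).
  exists s. split.
  - intro x. pose proof (limit_in_balls dG (cen x) (rr x) (s x) HmG (Hs x) (Hnest x) (Hrp x)) as Hl.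
    destruct (Hprops x) as [[_ [_ [j [Bj Hj]]]] HS].
    assert (Hall : forall k, W k x (s x)).
    { intro k. apply HWW. destruct (HS k) as [_ [_ [_ [_ [j' [Bj' Hj']]]]]].
      exists j'. split; auto. apply Hj'. apply (Hl (S k)). }
    apply (HA x (s x) Hall). apply HO. exists j. split; auto. apply Hj. apply (Hl 0%nat).
  - assert (HQ0b : forall i, borel dX (fun x => Q0 x i)).
    { intro i. unfold Q0. apply borel_cand, borel_cand, borel_union. intro j.
      apply (borel_ext dX (fun x => (forall y, cb i y -> V j y) /\ B j x)); [intro; tauto|].
      apply borel_cand, HB. }
    assert (HQSb : forall k i i', borel dX (fun x => QS x k i i')).
    { intros k i i'. unfold QS. apply borel_cand, borel_cand, borel_cand, borel_union. intro j.
      apply (borel_ext dX (fun x => (forall y, cb i' y -> VW k j y) /\ BW k j x)); [intro; tauto|].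
      apply borel_cand, HBW. }
    assert (Hidx : forall k i, borel dX (fun x => idx x k = i)).
    { induction k as [|k IH]; intro i.
      - apply (borel_ext dX (fun x => Q0 x i /\ forall m, ~ (m < i)%nat \/ ~ Q0 x m)).
        + intro x. change (idx x 0%nat) with (least (Q0 x)). rewrite (least_eq _ i (E0 x)).
          split; intros [H1 H2]; split; auto; intro m.
          * intro Hm. destruct (H2 m); [contradiction|auto].
          * destruct (classic (m < i)%nat); [right; apply H2; auto|left; auto].
        + apply borel_and; auto. apply borel_inter; intro m. apply borel_cor, borel_compl; auto.
      - apply (borel_ext dX (fun x => exists i0, idx x k = i0 /\ (QS x k i0 i /\ forall m, ~ (m < i)%nat \/ ~ QS x k i0 m))).
        + intro x. change (idx x (S k)) with (least (QS x k (idx x k))).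
          pose proof (least_eq (QS x k (idx x k)) i (ES x k _ (proj1 (proj2 (Hprops x) k)))) as Eq.
          split.
          * intros [i0 [<- [H1 H2]]]. apply Eq. split; auto. intros m Hm. destruct (H2 m); auto.
          * intro H. exists (idx x k). split; auto. apply Eq in H as [H1 H2]. split; auto.
            intro m. destruct (classic (m < i)%nat); [right; auto|left; auto].
        + apply borel_union. intro i0. apply borel_and; auto. apply borel_and; auto.
          apply borel_inter; intro m. apply borel_cor, borel_compl; auto. }
    intros U HU.
    apply (borel_ext dX (fun x => exists m K, forall k, ~ (K <= k)%nat \/
      (exists i, idx x k = i /\ forall w, dX (act (bcen DG e i) x) w < / INR (S m) -> U w))).
    + intro x. pose proof (act_conv dG dX act (cen x) (s x) x HmG HmX Hact (Hs x)) as Hy. split.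
      * intros [m [K H]]. destruct (Hy (/ INR (S m)) (inv_pos m)) as [N HN].
        destruct (H (max K N)) as [H'|[i [Hi HT]]]; [exfalso; apply H'; lia|].
        apply HT. subst i. apply (HN (max K N)). lia.
      * intro Hu. destruct (HU _ Hu) as [eps [He Hb]]. destruct (small_inv (eps/2)) as [m Hm]; [lra|].
        destruct (Hy (/ INR (S m)) (inv_pos m)) as [N HN]. exists m, N. intro k.
        destruct (Compare_dec.le_lt_dec N k) as [Hk|Hk]; [right|left; lia].
        exists (idx x k). split; auto. intros w Hw. apply Hb. specialize (HN k Hk).
        unfold cen in HN. pose proof (met_tri dX HmX (act (s x) x) (act (bcen DG e (idx x k)) x) w) as Ht.
        rewrite (met_sym dX HmX (act (s x) x) (act (bcen DG e (idx x k)) x)) in Ht. lra.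
    + apply borel_union; intro m. apply borel_union; intro K. apply borel_inter; intro k.
      apply borel_cor, borel_union; intro i. apply borel_and; auto.
      apply (Tm_borel dG dX act U); auto.
Qed.

Theorem mainTheorem7 (G : Type) (dG : G -> G -> R) (mul : G -> G -> G)
  (inv : G -> G) (e : G) (X : Type) (dX : X -> X -> R) (act : G -> X -> X)
  (C : X -> Prop) :
  polish_group dG mul inv e ->
  polish_metric dX ->
  continuous_action dG mul e dX act ->
  borel dX C ->
  lg_comeager dG act C ->
  borel_bireducible (sub_borel dX C) (borel dX) (orbit_rel_on act C) (orbit_rel act).
Proof.
  intros [[HmG [HcG [DG HDG]]] [[Hass [Hid Hinv]] [Hmul Hinvc]]] [HmX [HcX [DX HDX]]]
    [Hact1 [Hact2 Hact]] HC Hlg.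
  split.
  - exists (fun c => proj1_sig c). split.
    + intros A HA. exists A. split; auto. tauto.
    + intros x y. unfold orbit_rel_on. tauto.
  - assert (Hg : goodset dX dG act C) by (apply (borel_good dX dG act DX DG); auto).
    destruct (selector dG dX act e DG C HmG HcG HDG HmX Hact Hg Hlg) as [s [HsC Hsm]].
    exists (fun x => exist C (act (s x) x) (HsC x)). split.
    + intros Bs [A [HA HAB]].
      apply (borel_ext dX (fun x => A (act (s x) x))).
      * intro x. rewrite (HAB (exist C (act (s x) x) (HsC x))). simpl. tauto.
      * apply (borel_preimage dX dX (fun x => act (s x) x) Hsm A HA).
    + assert (Hcan : forall g x, act (inv g) (act g x) = x).
      { intros g x. rewrite <- Hact2. rewrite (proj1 (Hinv g)). apply Hact1. }
      intros x y. unfold orbit_rel_on, orbit_rel. simpl. split.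
      * intros [h Hh]. exists (mul (s y) (mul h (inv (s x)))).
        rewrite !Hact2. rewrite Hcan. rewrite Hh. reflexivity.
      * intros [h Hh]. exists (mul (inv (s y)) (mul h (s x))).
        rewrite !Hact2. rewrite Hh. apply Hcan.
Qed.
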